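(* Let $n,m\ge 1$, let $\boldsymbol{W}=(w_{ij})\in\mathbb{R}^{n\times n}$ be a symmetric matrix with non-negative entries, let $\boldsymbol{S}=(s_{kr})\in[0,1]^{m\times m}$ be symmetric with $s_{kk}=0$ for all $k$, let $\boldsymbol{\gamma}=(\gamma_1,\dots,\gamma_m)\in\mathbb{R}^m$, $\boldsymbol{\rho}=(\rho_1,\dots,\rho_m)\in[\frac{\pi}{4},\frac{\pi}{2})^m$ and $\alpha\in\mathbb{R}$. Consider the HoMTask Hopfield network $\mathcal{H}=\langle \boldsymbol{W},\boldsymbol{\gamma},\boldsymbol{\rho},\boldsymbol{S}\rangle$ whose states are matrices $\boldsymbol{X}=(x_{ik})$, $1\le i\le n$, $1\le k\le m$, with $x_{ik}\in\{\sin\rho_k,-\cos\rho_k\}$, with energy $$E_{\mathcal{H}}(\boldsymbol{X})=\sum_{k=1}^m\Big(-\tfrac12 {\boldsymbol{x}^{(k)}}^T\boldsymbol{W}\boldsymbol{x}^{(k)}+\gamma_k\sum_{i=1}^n x_{ik}+\tfrac{\alpha}{2}\Big(S_k\sum_{i=1}^n x_{ik}^2-\sum_{r\ne k}s_{kr}\sum_{i=1}^n x_{ik}x_{ir}\Big)\Big),$$ where $\boldsymbol{x}^{(k)}$ is the $k$-th column of $\boldsymbol{X}$ and $S_k=\sum_{r=1}^m s_{kr}$. Under the asynchronous dynamics in which, at each time step, a single neuron $(i,k)$ is updated by $$x_{ik}(t+1)=\begin{cases}\sin\rho_k & \text{if } \phi_{ik}(t)>0,\\ -\cos\rho_k & \text{if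 } \phi_{ik}(t)\le 0,\end{cases}\qquad \phi_{ik}(t)=\sum_{j=1}^n w_{ij}x_{jk}(t)-\theta_{ik}+\alpha\sum_{r\ne k}s_{kr}x_{ir}(t),$$ with $\theta_{ik}=\gamma_k+\frac{\alpha S_k}{2}(\sin\rho_k-\cos\rho_k)$ (all other neurons unchanged, and all $nm$ neurons updated in random order in each block of $nm$ consecutive steps), the network, starting from any initial state, eventually reaches a stable state (a state that no further neuron update changes), and this stable state is a local minimum of $E_{\mathcal{H}}$.
   Context: A HoMTask network consists of $m$ copies (one per task $k$) of a Hopfield network on the same $n$ neurons with weights $\boldsymbol{W}$; copy $k$ has neuron activation values $\{\sin\rho_k,-\cos\rho_k\}$ and activation threshold $\gamma_k$, and neuron $i$ of copy $k$ is additionally coupled to neuron $i$ of copy $r$ with weight proportional to $\alpha s_{kr}$. Each update does not increase the energy, where a local minimum is understood as a state from which no single-neuron update (by the rule above) decreases the energy. *)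

(* Defs.v *)
From HB Require Import structures.
From mathcomp Require Import all_boot all_order all_algebra.
From mathcomp Require Import reals trigo.
Set Implicit Arguments. Unset Strict Implicit. Unset Printing Implicit Defensive.
Import Order.TTheory GRing.Theory Num.Theory.
Local Open Scope ring_scope.

Section HoMTask.
Variable R : realType.
Variables n m : nat.

Definition Ssum (S : 'M[R]_m) (k : 'I_m) : R := \sum_(r < m) S k r.

Definition valid_state (rho : 'I_m -> R) (X : 'M[R]_(n, m)) : Prop :=
  forall i k, X i k = sin (rho k) \/ X i k = - cos (rho k).

Definition energy (W : 'M[R]_n) (gamma : 'I_m -> R) (S : 'M[R]_m) (alpha : R)
    (X : 'M[R]_(n, m)) : R :=
  \sum_(k < m)
    ( - (1/2) * (\sum_(i < n) \sum_(j < n) X i k * W i j * X j k)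
      + gamma k * (\sum_(i < n) X i k)
      + alpha / 2 *
        (Ssum S k * (\sum_(i < n) X i k ^+ 2)
         - \sum_(r < m | r != k) S k r * (\sum_(i < n) X i k * X i r))).

Definition theta (gamma rho : 'I_m -> R) (S : 'M[R]_m) (alpha : R) (k : 'I_m) : R :=
  gamma k + alpha * Ssum S k / 2 * (sin (rho k) - cos (rho k)).

Definition phi (W : 'M[R]_n) (gamma rho : 'I_m -> R) (S : 'M[R]_m) (alpha : R)
    (X : 'M[R]_(n, m)) (i : 'I_n) (k : 'I_m) : R :=
  \sum_(j < n) W i j * X j k - theta gamma rho S alpha k
  + alpha * \sum_(r < m | r != k) S k r * X i r.

Definition update (W : 'M[R]_n) (gamma rho : 'I_m -> R) (S : 'M[R]_m) (alpha : R)
    (X : 'M[R]_(n, m)) (i : 'I_n) (k : 'I_m) : 'M[R]_(n, m) :=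
  \matrix_(i', k')
    if (i' == i) && (k' == k) then
      (if 0 < phi W gamma rho S alpha X i k then sin (rho k) else - cos (rho k))
    else X i' k'.

Fixpoint traj (W : 'M[R]_n) (gamma rho : 'I_m -> R) (S : 'M[R]_m) (alpha : R)
    (sigma : nat -> 'I_n * 'I_m) (X0 : 'M[R]_(n, m)) (t : nat) : 'M[R]_(n, m) :=
  match t with
  | 0 => X0
  | t'.+1 => let X := traj W gamma rho S alpha sigma X0 t' in
             update W gamma rho S alpha X (sigma t').1 (sigma t').2
  end.

Definition block_schedule (sigma : nat -> 'I_n * 'I_m) : Prop :=
  forall (b : nat) (p : 'I_n * 'I_m),
    exists t : nat, (t < n * m)%N /\ sigma (b * (n * m) + t)%N = p.

Definition stable_state (W : 'M[R]_n) (gamma rho : 'I_m -> R) (S : 'M[R]_m) (alpha : R)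
    (X : 'M[R]_(n, m)) : Prop :=
  forall i k, update W gamma rho S alpha X i k = X.

Definition local_min (W : 'M[R]_n) (gamma rho : 'I_m -> R) (S : 'M[R]_m) (alpha : R)
    (X : 'M[R]_(n, m)) : Prop :=
  forall i k, energy W gamma S alpha X <= energy W gamma S alpha (update W gamma rho S alpha X i k).

End HoMTask.

(* Main.v *)
Require Import Defs.
From HB Require Import structures.
From mathcomp Require Import all_boot all_order all_algebra.
From mathcomp Require Import reals trigo.
From mathcomp Require Import ring lra.
Set Implicit Arguments. Unset Strict Implicit. Unset Printing Implicit Defensive.
Import Order.TTheory GRing.Theory Num.Theory.
Local Open Scope ring_scope.

Section Alg.
Variables (R : realType) (n m : nat) (W : 'M[R]_n) (S : 'M[R]_m)
  (gamma : 'I_m -> R) (alpha : R).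
Hypothesis hWsym : W^T = W.
Hypothesis hSsym : S^T = S.
Hypothesis hSdiag : forall k, S k k = 0.

Definition T1 (X : 'M[R]_(n,m)) := \sum_(k<m) \sum_(i<n) \sum_(j<n) X i k * W i j * X j k.
Definition T2 (X : 'M[R]_(n,m)) := \sum_(k<m) gamma k * \sum_(i<n) X i k.
Definition T3 (X : 'M[R]_(n,m)) := \sum_(k<m) Ssum S k * \sum_(i<n) X i k ^+ 2.
Definition T4 (X : 'M[R]_(n,m)) := \sum_(k<m) \sum_(r<m) S k r * \sum_(i<n) X i k * X i r.

Lemma sum_neq (F : 'I_m -> R) k : F k = 0 -> \sum_(r < m | r != k) F r = \sum_r F r.
Proof. by move=> H; rewrite [RHS](bigD1 k) //= H add0r. Qed.

Lemma energyE X : energy W gamma S alpha X = -(1/2) * T1 X + T2 X + alpha/2 * (T3 X - T4 X).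
Proof.
rewrite /energy /T1 /T2 /T3 /T4 -sumrB !mulr_sumr -!big_split /=.
apply: eq_bigr => k _; rewrite sum_neq ?hSdiag ?mul0r //.
Qed.

Variables (i : 'I_n) (k : 'I_m) (d : R).
Definition D (i' : 'I_n) (k' : 'I_m) : R := if (i' == i) && (k' == k) then d else 0.
Definition Xd (X : 'M[R]_(n,m)) : 'M[R]_(n,m) := \matrix_(i', k') (X i' k' + D i' k').

Lemma col1 (k' : 'I_m) (G : 'I_n -> R) :
  \sum_(i' < n) D i' k' * G i' = if k' == k then d * G i else 0.
Proof.
rewrite /D; have [e|ne] := eqVneq k' k; first subst k'.
  rewrite (bigD1 i) //= !eqxx /= big1 ?addr0 // => i' /negPf ->; by rewrite mul0r.
by apply: big1 => i' _; rewrite andbF mul0r.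
Qed.

Lemma col2 (G : 'I_n -> 'I_m -> R) :
  \sum_(k' < m) \sum_(i' < n) D i' k' * G i' k' = d * G i k.
Proof.
rewrite (eq_bigr (fun k' => if k' == k then d * G i k' else 0)); last first.
  by move=> k' _; exact: (col1 k' (fun i' => G i' k')).
by rewrite -big_mkcond big_pred1_eq.
Qed.

Lemma Dii : D i k = d. Proof. by rewrite /D !eqxx. Qed.

Lemma T1_upd X : T1 (Xd X) = T1 X + 2 * d * (\sum_(j<n) W i j * X j k) + d ^+ 2 * W i i.
Proof.
rewrite /T1.
have e : forall k' i' j', Xd X i' k' * W i' j' * Xd X j' k' =
  X i' k' * W i' j' * X j' k' + D i' k' * (W i' j' * X j' k')
  + D j' k' * (X i' k' * W i' j') + D i' k' * (D j' k' * W i' j').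
  by move=> k' i' j'; rewrite !mxE; ring.
under eq_bigr => k' _ do under eq_bigr => i' _ do under eq_bigr => j' _ do rewrite e.
under eq_bigr => k' _ do under eq_bigr => i' _ do rewrite !big_split.
under eq_bigr => k' _ do rewrite !big_split.
rewrite !big_split /=.
under [X in _ + X + _ + _]eq_bigr => k' _ do under eq_bigr => i' _ do rewrite -mulr_sumr.
rewrite col2.
under [X in _ + _ + X + _]eq_bigr => k' _ do rewrite exchange_big.
under [X in _ + _ + X + _]eq_bigr => k' _ do under eq_bigr => i' _ do rewrite -mulr_sumr.
rewrite col2.
under [X in _ + _ + _ + X]eq_bigr => k' _ do under eq_bigr => i' _ do rewrite -mulr_sumr.
rewrite col2 col1 eqxx.
have -> : \sum_(i0 < n) X i0 k * W i0 i = \sum_(j < n) W i j * X j k.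
  apply: eq_bigr => j _; rewrite mulrC; congr (_ * _).
  by rewrite -{1}hWsym mxE.
ring.
Qed.

Lemma T2_upd X : T2 (Xd X) = T2 X + d * gamma k.
Proof.
rewrite /T2.
have e : forall k', \sum_(i'<n) Xd X i' k' = \sum_(i'<n) X i' k' + \sum_(i'<n) D i' k' * 1.
  by move=> k'; rewrite -big_split; apply: eq_bigr => i' _; rewrite mxE mulr1.
under eq_bigr => k' _ do rewrite e mulrDr.
rewrite big_split /=; congr (_ + _).
under eq_bigr => k' _ do rewrite mulr_sumr.
under eq_bigr => k' _ do under eq_bigr => i' _ do rewrite mulrC -mulrA.
by rewrite (col2 (fun i' k' => 1 * gamma k')) mul1r.
Qed.

Lemma T3_upd X : T3 (Xd X) = T3 X + Ssum S k * (2 * d * X i k + d ^+ 2).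
Proof.
rewrite /T3.
have e : forall k' i', Xd X i' k' ^+ 2 = X i' k' ^+ 2 + D i' k' * (2 * X i' k') + D i' k' * (D i' k').
  by move=> k' i'; rewrite !mxE; ring.
under eq_bigr => k' _ do under eq_bigr => i' _ do rewrite e.
under eq_bigr => k' _ do rewrite !big_split /= !mulrDr.
rewrite !big_split /=.
under [X in _ + X + _]eq_bigr => k' _ do rewrite mulr_sumr.
under [X in _ + X + _]eq_bigr => k' _ do under eq_bigr => i' _ do rewrite mulrCA.
rewrite (col2 (fun i' k' => Ssum S k' * (2 * X i' k'))).
under [X in _ + X]eq_bigr => k' _ do rewrite mulr_sumr.
under [X in _ + X]eq_bigr => k' _ do under eq_bigr => i' _ do rewrite mulrCA.
rewrite (col2 (fun i' k' => Ssum S k' * D i' k')) Dii.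
ring.
Qed.

Lemma T4_upd X : T4 (Xd X) = T4 X + 2 * d * (\sum_(r<m) S k r * X i r).
Proof.
rewrite /T4.
have e : forall k' r i', S k' r * (Xd X i' k' * Xd X i' r) =
  S k' r * (X i' k' * X i' r) + D i' k' * (S k' r * X i' r)
  + D i' r * (S k' r * X i' k') + D i' k' * (S k' r * D i' r).
  by move=> k' r i'; rewrite !mxE; ring.
under eq_bigr => k' _ do under eq_bigr => r _ do rewrite mulr_sumr.
under eq_bigr => k' _ do under eq_bigr => r _ do under eq_bigr => i' _ do rewrite e.
under eq_bigr => k' _ do under eq_bigr => r _ do rewrite !big_split.
under eq_bigr => k' _ do rewrite !big_split.
rewrite !big_split /=.
have -> : \sum_(k'<m) \sum_(r<m) \sum_(i'<n) S k' r * (X i' k' * X i' r) =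
   \sum_(k'<m) \sum_(r<m) S k' r * \sum_(i'<n) X i' k' * X i' r.
  by apply: eq_bigr => k' _; apply: eq_bigr => r _; rewrite mulr_sumr.
under [X in _ + X + _ + _]eq_bigr => k' _ do rewrite exchange_big.
under [X in _ + X + _ + _]eq_bigr => k' _ do under eq_bigr => i' _ do rewrite -mulr_sumr.
rewrite (col2 (fun i' k' => \sum_(r<m) S k' r * X i' r)).
rewrite [X in _ + _ + X + _]exchange_big.
under [X in _ + _ + X + _]eq_bigr => r _ do rewrite exchange_big.
under [X in _ + _ + X + _]eq_bigr => r _ do under eq_bigr => i' _ do rewrite -mulr_sumr.
rewrite (col2 (fun i' r => \sum_(k'<m) S k' r * X i' k')).
under [X in _ + _ + _ + X]eq_bigr => k' _ do rewrite exchange_big.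
under [X in _ + _ + _ + X]eq_bigr => k' _ do under eq_bigr => i' _ do rewrite -mulr_sumr.
rewrite (col2 (fun i' k' => \sum_(r<m) S k' r * D i' r)).
have -> : \sum_(r<m) S k r * D i r = 0.
  apply: big1 => r _; rewrite /D eqxx /=.
  by have [->|_] := eqVneq r k; rewrite ?hSdiag ?mul0r ?mulr0.
have -> : \sum_(k'<m) S k' k * X i k' = \sum_(r<m) S k r * X i r.
  by apply: eq_bigr => r _; rewrite -{1}hSsym mxE.
ring.
Qed.


Lemma energy_upd X : energy W gamma S alpha (Xd X) = energy W gamma S alpha X +
  (-(1/2) * (2 * d * (\sum_(j<n) W i j * X j k) + d ^+ 2 * W i i) + d * gamma k
   + alpha / 2 * (Ssum S k * (2 * d * X i k + d ^+ 2) - 2 * d * (\sum_(r<m) S k r * X i r))).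
Proof. rewrite !energyE T1_upd T2_upd T3_upd T4_upd; ring. Qed.

End Alg.

Section Dyn.
Variables (R : realType) (n m : nat) (W : 'M[R]_n) (S : 'M[R]_m)
  (gamma rho : 'I_m -> R) (alpha : R).
Hypothesis hWsym : W^T = W.
Hypothesis hWnn : forall i j, 0 <= W i j.
Hypothesis hSsym : S^T = S.
Hypothesis hSdiag : forall k, S k k = 0.
Hypothesis hrho : forall k, pi / 4 <= rho k < pi / 2.

Lemma sin_pos k : 0 < sin (rho k).
Proof.
apply: sin_gt0_pihalf; have /andP[h1 h2] := hrho k; rewrite h2 andbT.
apply: lt_le_trans h1; apply: divr_gt0; [exact: pi_gt0 | by []].
Qed.

Lemma cos_pos k : 0 < cos (rho k).
Proof.
apply: cos_gt0_pihalf; have /andP[h1 h2] := hrho k; rewrite h2 andbT.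
have h0 : 0 < pi / 4 :> R by apply: divr_gt0; [exact: pi_gt0 | by []].
have h3 : 0 < pi / 2 :> R by apply: divr_gt0; [exact: pi_gt0 | by []].
lra.
Qed.

Let E := energy W gamma S alpha.
Let upd := update W gamma rho S alpha.

Lemma upd_Xd X i k : upd X i k =
  Xd i k ((if 0 < phi W gamma rho S alpha X i k then sin (rho k) else - cos (rho k)) - X i k) X.
Proof.
apply/matrixP => i' k'; rewrite !mxE /D.
by case: ifP => [/andP[/eqP -> /eqP ->]|_]; rewrite ?addr0 // addrC subrK.
Qed.

Lemma phiE X i k : phi W gamma rho S alpha X i k =
  \sum_(j<n) W i j * X j k - theta gamma rho S alpha k + alpha * \sum_(r<m) S k r * X i r.
Proof. by rewrite /phi sum_neq // hSdiag mul0r. Qed.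

Lemma valid_upd X i k : valid_state rho X -> valid_state rho (upd X i k).
Proof.
move=> hX i' k'; rewrite /upd /update mxE.
case: ifP => [/andP[_ /eqP ->]|_]; last exact: hX.
by case: ifP; [left|right].
Qed.

Definition cnt (X : 'M[R]_(n,m)) := #|[set p : 'I_n * 'I_m | X p.1 p.2 == sin (rho p.2)]|.
Definition prec (Y X : 'M[R]_(n,m)) : bool :=
  (E Y < E X) || ((E Y <= E X) && (cnt Y < cnt X)%N).

Lemma prec_trans Z Y X : prec Z Y -> prec Y X -> prec Z X.
Proof.
rewrite /prec => /orP[h1|/andP[h1 h2]] /orP[h3|/andP[h3 h4]].
- by rewrite (lt_trans h1 h3).
- by rewrite (lt_le_trans h1 h3).
- by rewrite (le_lt_trans h1 h3).
- by rewrite (le_trans h1 h3) (ltn_trans h2 h4) orbT.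
Qed.

Lemma prec_irr X : ~~ prec X X.
Proof. by rewrite /prec ltxx ltnn andbF. Qed.

Lemma step X i k : valid_state rho X -> upd X i k = X \/ prec (upd X i k) X.
Proof.
move=> hX.
have hs := sin_pos k; have hc := cos_pos k.
have hW := hWnn i i.
have same : forall v, v = X i k -> Xd i k (v - X i k) X = X.
  move=> v ->; apply/matrixP => i' k'; by rewrite !mxE subrr /D; case: ifP; rewrite addr0.
rewrite upd_Xd.
set ph := phi _ _ _ _ _ X i k.
have hph : ph = \sum_(j<n) W i j * X j k - theta gamma rho S alpha k + alpha * \sum_(r<m) S k r * X i r.
  exact: phiE.
case: (hX i k) => hx; case: ifP => hp.
- by left; apply: same.
- right; apply/orP; right; apply/andP; split.
  + rewrite /E energy_upd // hx -[X in _ <= X]addr0 lerD2l.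
    set P := \sum_(j<n) _. set Q := \sum_(r<m) _.
    have -> : (- (1 / 2) * (2 * (- cos (rho k) - sin (rho k)) * P + (- cos (rho k) - sin (rho k)) ^+ 2 * W i i) +
      (- cos (rho k) - sin (rho k)) * gamma k +
      alpha / 2 * (Ssum S k * (2 * (- cos (rho k) - sin (rho k)) * sin (rho k) + (- cos (rho k) - sin (rho k)) ^+ 2) -
      2 * (- cos (rho k) - sin (rho k)) * Q)) =
      (cos (rho k) + sin (rho k)) * ph - (cos (rho k) + sin (rho k)) ^+ 2 * W i i / 2.
      by rewrite hph /theta /P /Q; field.
    have h1 : (cos (rho k) + sin (rho k)) * ph <= 0.
      by apply: mulr_ge0_le0; [lra | rewrite leNgt hp].
    have h2 : 0 <= (cos (rho k) + sin (rho k)) ^+ 2 * W i i / 2.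
      by apply: divr_ge0 => //; apply: mulr_ge0 => //; apply: sqr_ge0.
    lra.
  + rewrite /cnt; apply: proper_card; apply/properP; split.
      apply/subsetP => -[i' k']; rewrite !inE /= mxE /D.
      case: ifP => [/andP[/eqP -> /eqP ->]|_]; last by rewrite addr0.
      rewrite hx => /eqP h; exfalso.
      have : sin (rho k) + (- cos (rho k) - sin (rho k)) = - cos (rho k) by ring.
      lra.
    exists (i, k); rewrite !inE /= ?mxE /D ?eqxx /= hx; first by rewrite eqxx.
    apply/negP => /eqP h.
    have : sin (rho k) + (- cos (rho k) - sin (rho k)) = - cos (rho k) by ring.
    lra.
- right; apply/orP; left.
  rewrite /E energy_upd // hx -[X in _ < X]addr0 ltrD2l.
  set P := \sum_(j<n) _. set Q := \sum_(r<m) _.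
  have -> : (- (1 / 2) * (2 * (sin (rho k) - - cos (rho k)) * P + (sin (rho k) - - cos (rho k)) ^+ 2 * W i i) +
      (sin (rho k) - - cos (rho k)) * gamma k +
      alpha / 2 * (Ssum S k * (2 * (sin (rho k) - - cos (rho k)) * - cos (rho k) + (sin (rho k) - - cos (rho k)) ^+ 2) -
      2 * (sin (rho k) - - cos (rho k)) * Q)) =
      - ((cos (rho k) + sin (rho k)) * ph) - (cos (rho k) + sin (rho k)) ^+ 2 * W i i / 2.
    by rewrite hph /theta /P /Q; field.
  have h1 : 0 < (cos (rho k) + sin (rho k)) * ph.
    by apply: mulr_gt0; [lra | rewrite hp].
  have h2 : 0 <= (cos (rho k) + sin (rho k)) ^+ 2 * W i i / 2.
    by apply: divr_ge0 => //; apply: mulr_ge0 => //; apply: sqr_ge0.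
  lra.
- by left; apply: same.
Qed.


Definition toS (f : {ffun 'I_n * 'I_m -> bool}) : 'M[R]_(n,m) :=
  \matrix_(i, k) if f (i, k) then sin (rho k) else - cos (rho k).
Definition code (X : 'M[R]_(n,m)) : {ffun 'I_n * 'I_m -> bool} :=
  [ffun p => X p.1 p.2 == sin (rho p.2)].

Lemma toS_code X : valid_state rho X -> toS (code X) = X.
Proof.
move=> hX; apply/matrixP => i k; rewrite !mxE ffunE /=.
case: (hX i k) => ->; first by rewrite eqxx.
rewrite ifF //; apply/eqP => h.
have := sin_pos k; have := cos_pos k; lra.
Qed.

Definition mu X := #|[set f : {ffun 'I_n * 'I_m -> bool} | prec (toS f) X]|.

Lemma mu_lt Y X : valid_state rho Y -> prec Y X -> (mu Y < mu X)%N.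
Proof.
move=> hY hYX; apply: proper_card; apply/properP; split.
  by apply/subsetP => f; rewrite !inE => h; exact: prec_trans h hYX.
by exists (code Y); rewrite !inE toS_code // ?hYX // prec_irr.
Qed.

Lemma mu_step X i k : valid_state rho X -> upd X i k = X \/ (mu (upd X i k) < mu X)%N.
Proof.
move=> hX; case: (step i k hX) => h; [by left | right].
by apply: mu_lt => //; exact: valid_upd.
Qed.

Variables (sigma : nat -> 'I_n * 'I_m) (X0 : 'M[R]_(n, m)).
Hypothesis hsigma : block_schedule sigma.
Hypothesis hX0 : valid_state rho X0.
Let tr := traj W gamma rho S alpha sigma X0.

Lemma tr_valid t : valid_state rho (tr t).
Proof. elim: t => [//|t IH] /=; exact: valid_upd. Qed.

Lemma tr_step t : tr t.+1 = tr t \/ (mu (tr t.+1) < mu (tr t))%N.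
Proof. exact: (mu_step _ _ (tr_valid t)). Qed.

Lemma tr_mono t j : (mu (tr (t + j)) <= mu (tr t))%N.
Proof.
elim: j => [|j IH]; first by rewrite addn0.
rewrite addnS; case: (tr_step (t + j)) => [->//|h].
exact: leq_trans (ltnW h) IH.
Qed.

Lemma block b : (mu (tr (b * (n * m) + n * m)) < mu (tr (b * (n * m))))%N \/
  stable_state W gamma rho S alpha (tr (b * (n * m))).
Proof.
set t0 := b * (n * m).
case: (ltnP (mu (tr (t0 + n * m))) (mu (tr t0))) => h; [by left | right].
have const : forall j, (j <= n * m)%N -> tr (t0 + j) = tr t0.
  elim => [|j IH] hj; first by rewrite addn0.
  have hj' : (j <= n * m)%N by exact: ltnW.
  rewrite addnS; case: (tr_step (t0 + j)) => e; first by rewrite e IH.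
  exfalso.
  have e2 : ((t0 + j).+1 + (n * m - j.+1) = t0 + n * m)%N.
    by rewrite addSn -addnA -addnS -addSn subnKC.
  have m1 := tr_mono (t0 + j).+1 (n * m - j.+1); rewrite e2 in m1.
  rewrite IH // in e.
  by have := leq_trans h m1; rewrite leqNgt e.
move=> i k.
have [t [ht hst]] := hsigma b (i, k).
have e : tr (t0 + t).+1 = upd (tr (t0 + t)) (sigma (t0 + t)).1 (sigma (t0 + t)).2 by [].
have := const t.+1 ht; rewrite addnS e hst /= const; [by [] | exact: ltnW].
Qed.

Lemma persist T : stable_state W gamma rho S alpha (tr T) -> forall j, tr (T + j) = tr T.
Proof.
move=> hT; elim => [|j IH]; first by rewrite addn0.
have e : tr (T + j).+1 = upd (tr (T + j)) (sigma (T + j)).1 (sigma (T + j)).2 by [].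
by rewrite addnS e IH; exact: hT.
Qed.

Lemma ex_stable : exists T, stable_state W gamma rho S alpha (tr T).
Proof.
suff: forall N b, (mu (tr (b * (n * m))) < N)%N -> exists T, stable_state W gamma rho S alpha (tr T).
  by move=> /(_ (mu (tr 0)).+1 0); rewrite mul0n; apply.
elim => [//|N IH] b hb.
case: (block b) => h; last by exists (b * (n * m)).
apply: (IH b.+1); rewrite mulSn addnC; rewrite ltnS in hb; exact: leq_trans h hb.
Qed.

End Dyn.

Theorem theorem1 (R : realType) (n m : nat) (hn : (0 < n)%N) (hm : (0 < m)%N)
  (W : 'M[R]_n) (S : 'M[R]_m) (gamma rho : 'I_m -> R) (alpha : R)
  (hWsym : W^T = W) (hWnn : forall i j, 0 <= W i j)
  (hSsym : S^T = S) (hS01 : forall k r, 0 <= S k r <= 1)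
  (hSdiag : forall k, S k k = 0)
  (hrho : forall k, pi / 4 <= rho k < pi / 2)
  (sigma : nat -> 'I_n * 'I_m) (hsigma : block_schedule sigma)
  (X0 : 'M[R]_(n, m)) (hX0 : valid_state rho X0) :
  exists T : nat,
    stable_state W gamma rho S alpha (traj W gamma rho S alpha sigma X0 T)
    /\ (forall t, (T <= t)%N ->
          traj W gamma rho S alpha sigma X0 t = traj W gamma rho S alpha sigma X0 T)
    /\ local_min W gamma rho S alpha (traj W gamma rho S alpha sigma X0 T).
Proof.
have [T hT] : exists T, stable_state W gamma rho S alpha (traj W gamma rho S alpha sigma X0 T).
  exact: (ex_stable gamma alpha hWsym hWnn hSsym hSdiag hrho hsigma hX0).
exists T; split; first exact: hT.
split.
  move=> t ht; rewrite -(subnKC ht).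
  exact: (persist hT).
by move=> i k; rewrite /local_min (hT i k).
Qed.
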